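(* Let $r\ge1$, let $\kappa\ge\max\{\tfrac32m_2-1,2\}$, and let $U_0\in\mathcal X_{m_2}$. Then for every time step $\tau>0$, the iterates of the rescaled ETDRK$r$ scheme ($U^0=U_0$, $U^{n+1}=W_r^n(\tau)$) satisfy $\|U^n(\boldsymbol x)\|_{\rm F}\le\sqrt{m_2}$ for all $n\ge1$ and all $\boldsymbol x\in\Omega$.
   Context: Let $d\in\{1,2,3\}$ and let $\Omega\subset\mathbb{R}^d$ be a rectangular box, all functions on $\Omega$ being $\Omega$-periodic. Let $m_1\ge m_2\ge1$ be integers, $\varepsilon>0$, $\kappa>0$. $\|\cdot\|_{\rm F}$ is the Frobenius norm. For $U\in\mathbb{R}^{m_1\times m_2}$, $f(U)=U-UU^\top U$ and $\mathcal N[U]=\kappa U+f(U)$ (applied pointwise to functions). $\mathcal X$ is the Banach space of continuous $\Omega$-periodic functions $\overline\Omega\to\mathbb{R}^{m_1\times m_2}$ with norm $\|W\|_{\mathcal X}=\max_{\boldsymbol x}\|W(\boldsymbol x)\|_{\rm F}$, and $\mathcal X_{m_2}=\{W\in\mathcal X:\|W\|_{\mathcal X}\le\sqrt{m_2}\}$. $\mathcal L_\kappa=\varepsilon^2\Delta-\kappa\mathcal I$ with periodic boundary conditions, acting componentwise, and $e^{t\mathcal L_\kappa}=e^{-\kappa t}e^{t\varepsilon^2\Delta}$ with $e^{t\varepsilon^2\Delta}$ the periodic heat semigroup. Rescaled ETDRK scheme: for each $j\ge1$ fix nodes $0=a_{j,0}<a_{j,1}<\dots<a_{j,j}=1$.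 Given a time step $\tau>0$ and $U^n\in\mathcal X$, define for $s\in[0,\tau]$: $W_1^n(s)=e^{s\mathcal L_\kappa}U^n+\int_0^s e^{(s-\sigma)\mathcal L_\kappa}\mathcal N[U^n]\,\mathrm d\sigma$. Recursively for $j\ge1$: let $P_j^n(s,\boldsymbol x)$ be the unique polynomial in $s$ of degree $\le j$ with coefficients in $\mathbb{R}^{m_1\times m_2}$ (depending on $\boldsymbol x$) such that $P_j^n(0,\boldsymbol x)=\mathcal N[U^n(\boldsymbol x)]$ and $P_j^n(a_{j,k}\tau,\boldsymbol x)=\mathcal N[W_j^n(a_{j,k}\tau,\boldsymbol x)]$ for $k=1,\dots,j$; let $\alpha_j^n(\boldsymbol x)=\min\{\kappa\sqrt{m_2}/\max_{s\in[0,\tau]}\|P_j^n(s,\boldsymbol x)\|_{\rm F},\,1\}$ (taken to be $1$ if the maximum is $0$), $\widetilde P_j^n(s,\boldsymbol x)=\alpha_j^n(\boldsymbol x)P_j^n(s,\boldsymbol x)$, and $W_{j+1}^n(s)=e^{s\mathcal L_\kappa}U^n+\int_0^s e^{(s-\sigma)\mathcal L_\kappa}\widetilde P_j^n(\sigma)\,\mathrm d\sigma$. The rescaled ETDRK$r$ scheme is $U^0=U_0$, $U^{n+1}=W_r^n(\tau)$ for $n\ge0$. *)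

(* Defs.v *)
From mathcomp Require Import all_boot all_order all_algebra.
From mathcomp Require Import all_classical all_reals all_analysis.
Set Implicit Arguments.
Unset Strict Implicit.
Unset Printing Implicit Defensive.
Import Order.TTheory GRing.Theory Num.Theory.
Import numFieldNormedType.Exports.
Local Open Scope classical_set_scope.
Local Open Scope ring_scope.

Section ETDRK.
Variables (R : realType) (d m1 m2 : nat).

Definition pt := 'rV[R]_d.
Definition field := pt -> 'M[R]_(m1, m2).

Definition frob (A : 'M[R]_(m1, m2)) : R :=
  Num.sqrt (\sum_(i < m1) \sum_(j < m2) A i j ^+ 2).

Definition fAC (A : 'M[R]_(m1, m2)) : 'M[R]_(m1, m2) := A - A *m A^T *m A.
Definition Nop (kappa : R) (A : 'M[R]_(m1, m2)) : 'M[R]_(m1, m2) :=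
  kappa *: A + fAC A.

Definition in_box (lo hi : 'I_d -> R) (x : pt) : Prop :=
  forall i, lo i <= x ord0 i <= hi i.
Definition unit_vec (i : 'I_d) : pt := delta_mx ord0 i.
Definition box_periodic (lo hi : 'I_d -> R) (U : field) : Prop :=
  forall x i, U (x + (hi i - lo i) *: unit_vec i) = U x.

Definition gauss (t z : R) : R :=
  expR (- (z ^+ 2) / (4 * t)) / Num.sqrt (4 * pi * t).

Definition heat_dir (i : 'I_d) (t : R) (u : field) : field :=
  fun x => if t <= 0 then u x else
    \matrix_(p < m1, q < m2)
      (\int[@lebesgue_measure R]_(z in [set: R]) (gauss t z * u (x - z *: unit_vec i) p q)).

(* the heat semigroup e^{t Delta} on R^d (with periodic data): convolution
   with the d-dimensional Gauss kernel, written as the product of the 1-d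
   kernels, i.e. composition of the directional flows *)
Definition heat (t : R) (u : field) : field :=
  foldr (fun i v => heat_dir i t v) u (enum 'I_d).

(* e^{s L_kappa} = e^{-kappa s} e^{s eps^2 Delta} *)
Definition semigroupL (eps kappa s : R) (u : field) : field :=
  fun x => expR (- kappa * s) *: heat (eps ^+ 2 * s) u x.

Definition duhamel (eps kappa s : R) (F : R -> field) : field :=
  fun x => \matrix_(p < m1, q < m2)
    (\int[@lebesgue_measure R]_(sigma in `[0, s])
        (semigroupL eps kappa (s - sigma) (F sigma) x p q)).

Definition interp (j : nat) (t : nat -> R) (v : nat -> 'M[R]_(m1, m2)) (s : R)
  : 'M[R]_(m1, m2) :=
  \sum_(k < j.+1)
     (\prod_(l < j.+1 | l != k) ((s - t l) / (t k - t l))) *: v k.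

(* One step of the rescaled ETDRK scheme.
   a j k = a_{j,k};  Wstage j = W_{j+1}^n (a function of s). *)
Section Step.
Variables (eps kappa tau : R) (a : nat -> nat -> R) (U : field).

Definition Pj (j : nat) (Wj : R -> field) (s : R) (x : pt) : 'M[R]_(m1, m2) :=
  interp j (fun k => a j k * tau)
    (fun k => if k == 0%N then Nop kappa (U x) else Nop kappa (Wj (a j k * tau) x)) s.

Definition alpha (j : nat) (Wj : R -> field) (x : pt) : R :=
  let M := sup [set frob (Pj j Wj s x) | s in `[0, tau]] in
  if M == 0 then 1 else Num.min (kappa * Num.sqrt m2%:R / M) 1.

Definition Ptilde (j : nat) (Wj : R -> field) (s : R) : field :=
  fun x => alpha j Wj x *: Pj j Wj s x.

Fixpoint Wstage (j : nat) : R -> field :=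
  match j with
  | 0%N => fun s x => semigroupL eps kappa s U x
                      + duhamel eps kappa s (fun _ => fun y => Nop kappa (U y)) x
  | j'.+1 => fun s x => semigroupL eps kappa s U x
                      + duhamel eps kappa s (Ptilde j (Wstage j')) x
  end.

End Step.

Fixpoint etdrk (r : nat) (eps kappa tau : R) (a : nat -> nat -> R) (U0 : field)
  (n : nat) : field :=
  match n with
  | 0%N => U0
  | n'.+1 => Wstage eps kappa tau a (etdrk r eps kappa tau a U0 n') r.-1 tau
  end.

End ETDRK.

(* Main.v *)
Require Import Defs.
From mathcomp Require Import all_boot all_order all_algebra.
From mathcomp Require Import all_classical all_reals all_analysis.
From mathcomp Require Import ring lra.
Import Order.TTheory GRing.Theory Num.Theory.
Import numFieldNormedType.Exports.
Set Implicit Arguments.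
Unset Strict Implicit.
Unset Printing Implicit Defensive.
Local Open Scope classical_set_scope.
Local Open Scope ring_scope.
Section CS.
Context {R : realType}.

Definition ssq (I : finType) (a : I -> R) := \sum_i a i ^+ 2.

Lemma ssq_ge0 (I : finType) (a : I -> R) : 0 <= ssq a.
Proof. by apply: sumr_ge0 => i _; exact: sqr_ge0. Qed.

Lemma CS2 (I : finType) (a b : I -> R) :
  (\sum_i a i * b i) ^+ 2 <= ssq a * ssq b.
Proof.
set A := ssq a; set B := ssq b; set C := \sum_i a i * b i.
have H : 0 <= \sum_i (B * a i - C * b i) ^+ 2 by apply: sumr_ge0 => i _; exact: sqr_ge0.
have E : \sum_i (B * a i - C * b i) ^+ 2 = B * (A * B - C ^+ 2).
  rewrite (eq_bigr (fun i => B^+2 * a i ^+ 2 - (2 * B * C) * (a i * b i) + C^+2 * b i ^+ 2)); last first.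
    by move=> i _; ring.
  rewrite big_split /= big_split /= sumrN -!mulr_sumr /A /B /C /ssq; ring.
have [B0|Bp] := eqVneq B 0.
  have b0 : forall i, b i = 0.
    move=> i; have /eqP := B0; rewrite /B /ssq psumr_eq0; last by move=> j _; exact: sqr_ge0.
    by move=> /allP /(_ i (mem_index_enum _)) /=; rewrite sqrf_eq0 => /eqP.
  have -> : C = 0 by rewrite /C big1 // => i _; rewrite b0 mulr0.
  by rewrite expr0n /= mulr_ge0 // ssq_ge0.
have Bpos : 0 < B by rewrite lt_def Bp ssq_ge0.
by rewrite -subr_ge0 -(pmulr_rge0 _ Bpos) -E.
Qed.

Lemma CS (I : finType) (a b : I -> R) :
  \sum_i a i * b i <= Num.sqrt (ssq a) * Num.sqrt (ssq b).
Proof.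
rewrite -sqrtrM ?ssq_ge0 //.
have [C0|C0] := leP (\sum_i a i * b i) 0.
  by apply: le_trans C0 _; exact: sqrtr_ge0.
by rewrite -(ger0_norm (ltW C0)) -sqrtr_sqr ler_sqrt ?mulr_ge0 ?ssq_ge0 // CS2.
Qed.

Lemma ssq_tri (I : finType) (a b : I -> R) :
  Num.sqrt (ssq (fun i => a i + b i)) <= Num.sqrt (ssq a) + Num.sqrt (ssq b).
Proof.
rewrite -(ger0_norm (addr_ge0 (sqrtr_ge0 (ssq a)) (sqrtr_ge0 (ssq b)))) -sqrtr_sqr.
rewrite ler_sqrt ?sqr_ge0 //.
have -> : ssq (fun i => a i + b i) = ssq a + 2 * \sum_i a i * b i + ssq b.
  rewrite /ssq (eq_bigr (fun i => a i ^+ 2 + 2 * (a i * b i) + b i ^+ 2)); last by move=> i _; ring.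
  by rewrite !big_split /= -mulr_sumr.
rewrite sqrrD !sqr_sqrtr ?ssq_ge0 // lerD2r lerD2l.
have := CS a b; rewrite -mulr_natl -mulrA; lra.
Qed.

End CS.
Section InnerInt.
Local Open Scope ereal_scope.
Context {dT : measure_display} {T : measurableType dT} {R : realType}.
Variables (mu : {measure set T -> \bar R}) (D : set T).

Lemma int_le (f g : T -> \bar R) : (forall x, D x -> 0 <= f x) ->
  (forall x, D x -> f x <= g x) ->
  \int[mu]_(x in D) f x <= \int[mu]_(x in D) g x.
Proof.
move=> f0 fg; have g0 : forall x, D x -> 0 <= g x.
  by move=> x Dx; apply: le_trans (f0 x Dx) (fg x Dx).
rewrite !ge0_integralE //; apply: ereal_sup_le => _ [h /= hf <-]; exists h => //= x.
apply: le_trans (hf x) _; rewrite /patch; case: ifP => // /set_mem Dx; exact: fg.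
Qed.

Lemma sup_addle (A B C : set (\bar R)) : A 0 -> B 0 ->
  (forall a, A a -> 0 <= a) ->
  (forall a b, A a -> B b -> a + b <= ereal_sup C) ->
  ereal_sup A + ereal_sup B <= ereal_sup C.
Proof.
move=> A0 B0 Ap H.
have sB0 : 0 <= ereal_sup B by apply: ereal_sup_ubound.
have sA0 : 0 <= ereal_sup A by apply: ereal_sup_ubound.
have H1 : forall a, A a -> a + ereal_sup B <= ereal_sup C.
  move=> a Aa.
  have [afin|] := boolP (a \is a fin_num).
    rewrite addeC -leeBrDr //; apply: ge_ereal_sup => b Bb.
    by rewrite leeBrDr // addeC; exact: H.
  rewrite fin_numE negb_and !negbK => /orP[/eqP am|/eqP ap].
    by have := Ap a Aa; rewrite am.
  have := H a 0 Aa B0; rewrite ap adde0 leye_eq => /eqP ->; exact: leey.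
have [bfin|] := boolP (ereal_sup B \is a fin_num).
  rewrite -leeBrDr //; apply: ge_ereal_sup => a Aa.
  by rewrite leeBrDr //; exact: H1.
rewrite fin_numE negb_and !negbK => /orP[/eqP bm|/eqP bp].
  by move: sB0; rewrite bm.
have := H1 0 A0; rewrite bp add0e leye_eq => /eqP ->; exact: leey.
Qed.

Import HBNNSimple.

Lemma int_add (f g : T -> \bar R) : (forall x, D x -> 0 <= f x) ->
  (forall x, D x -> 0 <= g x) ->
  \int[mu]_(x in D) f x + \int[mu]_(x in D) g x <= \int[mu]_(x in D) (f x + g x).
Proof.
move=> f0 g0; have fg0 : forall x, D x -> 0 <= f x + g x.
  by move=> x Dx; rewrite adde_ge0 // ?f0 ?g0.
rewrite !ge0_integralE //; apply: sup_addle.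
- by exists nnsfun0 => //=; [move=> x; rewrite /patch; case: ifP => // /set_mem /f0|exact: sintegral0].
- by exists nnsfun0 => //=; [move=> x; rewrite /patch; case: ifP => // /set_mem /g0|exact: sintegral0].
- by move=> _ [h _ <-]; exact: sintegral_ge0.
move=> _ _ [h1 /= h1f <-] [h2 /= h2f <-].
rewrite -sintegralD; apply: ereal_sup_ubound; exists (add_nnsfun h1 h2) => //= x.
have := h1f x; have := h2f x; rewrite /patch; case: ifP => _.
  by move=> a b; rewrite EFinD; exact: leeD.
move=> a b; move: a b; rewrite (_ : (point : \bar R) = 0) // => a b.
by rewrite EFinD; apply: le_trans (leeD b a) _; rewrite adde0.
Qed.

Lemma int_scale (k : R) (f : T -> \bar R) : (0 <= k)%R -> (forall x, D x -> 0 <= f x) ->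
  k%:E * \int[mu]_(x in D) f x <= \int[mu]_(x in D) (k%:E * f x).
Proof.
move=> k0 f0; have kf0 : forall x, D x -> 0 <= k%:E * f x.
  by move=> x Dx; rewrite mule_ge0 // f0.
rewrite !ge0_integralE // -ereal_supZl //; last first.
  apply/set0P; exists 0; exists nnsfun0 => //=; last exact: sintegral0.
  by move=> x; rewrite /patch; case: ifP => // /set_mem /f0.
apply: ereal_sup_le => _ [_ [h /= hf <-] <-].
exists (scale_nnsfun h k0); last by rewrite /scale_nnsfun sintegralrM.
move=> /= x; have := hf x; rewrite /patch; case: ifP => _ hx.
  by rewrite EFinM lee_wpmul2l // lee_fin.
by rewrite EFinM; move: hx; rewrite lee_fin => hx; rewrite lee_fin mulr_ge0_le0.
Qed.

Lemma int_sum (I : Type) (r : seq I) (F : I -> T -> \bar R) :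
  (forall i x, D x -> 0 <= F i x) ->
  \sum_(i <- r) \int[mu]_(x in D) F i x <= \int[mu]_(x in D) (\sum_(i <- r) F i x).
Proof.
move=> F0; elim: r => [|i r IH].
  by rewrite big_nil; apply: integral_ge0 => x _; rewrite big_nil.
have -> : (fun x => \sum_(j <- i :: r) F j x) = (fun x => F i x + \sum_(j <- r) F j x).
  by apply/funext => x; rewrite big_cons.
rewrite big_cons.
apply: le_trans (leeD2l _ IH) _; apply: int_add => // x Dx.
  exact: F0.
by apply: sume_ge0 => j _; exact: F0.
Qed.

End InnerInt.

Section FrobInt.
Context {R : realType}.

Definition fsq m n (A : 'M[R]_(m, n)) := \sum_i \sum_j A i j ^+ 2.

Lemma fsq_ge0 m n (A : 'M[R]_(m, n)) : 0 <= fsq A.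
Proof. by apply: sumr_ge0 => i _; apply: sumr_ge0 => j _; exact: sqr_ge0. Qed.

Lemma frobE m n (A : 'M[R]_(m, n)) : frob A = Num.sqrt (fsq A).
Proof. by []. Qed.

Lemma frob_ge0 m n (A : 'M[R]_(m, n)) : 0 <= frob A.
Proof. exact: sqrtr_ge0. Qed.

Lemma frob_sq m n (A : 'M[R]_(m, n)) : frob A ^+ 2 = fsq A.
Proof. by rewrite frobE sqr_sqrtr // fsq_ge0. Qed.

Lemma frob_ssq m n (A : 'M[R]_(m, n)) :
  frob A = Num.sqrt (ssq (fun pq : 'I_m * 'I_n => A pq.1 pq.2)).
Proof. by rewrite frobE /fsq /ssq pair_bigA. Qed.

Lemma frob_entry m n (A : 'M[R]_(m, n)) p q : `|A p q| <= frob A.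
Proof.
rewrite frobE -sqrtr_sqr ler_sqrt ?fsq_ge0 // /fsq (bigD1 p) //= (bigD1 q) //=.
rewrite -addrA lerDl; apply: addr_ge0; apply: sumr_ge0 => i _; last first.
  by apply: sumr_ge0 => j _; exact: sqr_ge0.
exact: sqr_ge0.
Qed.

Lemma posneg_abs (T : Type) (f : T -> R) x : (f^\+ x + f^\- x = `|f x|)%R.
Proof.
rewrite /funrpos /funrneg /= !maxEle; have [h|h] := leP (f x) 0.
  rewrite add0r lerNl oppr0; case: ifP => h'.
    by rewrite (_ : f x = 0) ?normr0 //; apply/eqP; rewrite eq_le h h'.
  by rewrite ler0_norm.
rewrite lerNl oppr0; case: ifP => h'; first by rewrite addr0 gtr0_norm.
by move: h'; rewrite (ltW h).
Qed.

Context {dT : measure_display} {T : measurableType dT}.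
Variables (mu : {measure set T -> \bar R}) (D : set T).

Lemma frob_Rint m n (f : 'I_m -> 'I_n -> T -> R) (G : T -> R) :
  (forall x, D x -> frob (\matrix_(p, q) f p q x) <= G x) ->
  (\int[mu]_(x in D) (G x)%:E < +oo)%E ->
  frob (\matrix_(p, q) (\int[mu]_(x in D) f p q x)) <= \int[mu]_(x in D) G x.
Proof.
move=> fG Gfin.
have G0 : forall x, D x -> 0 <= G x.
  by move=> x Dx; apply: le_trans (frob_ge0 _) (fG x Dx).
set gE := (\int[mu]_(x in D) (G x)%:E)%E.
have gE0 : (0 <= gE)%E by apply: integral_ge0 => x Dx; rewrite lee_fin G0.
have gEf : gE \is a fin_num by rewrite ge0_fin_numE.
have absf : forall p q x, D x -> `|f p q x| <= G x.
  move=> p q x Dx; apply: le_trans (fG x Dx).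
  by have := frob_entry (\matrix_(p, q) f p q x) p q; rewrite mxE.
pose Ip p q := (\int[mu]_(x in D) ((EFin \o f p q)^\+ x))%E.
pose In p q := (\int[mu]_(x in D) ((EFin \o f p q)^\- x))%E.
have Ipl : forall p q, (0 <= Ip p q)%E /\ (Ip p q <= gE)%E.
  move=> p q; split; first by apply: integral_ge0 => x _; exact: funepos_ge0.
  apply: int_le => [x _|x Dx]; first exact: funepos_ge0.
  rewrite funerpos /= lee_fin; apply: le_trans (absf p q x Dx).
  by rewrite -posneg_abs lerDl funrneg_ge0.
have Inl : forall p q, (0 <= In p q)%E /\ (In p q <= gE)%E.
  move=> p q; split; first by apply: integral_ge0 => x _; exact: funeneg_ge0.
  apply: int_le => [x _|x Dx]; first exact: funeneg_ge0.
  rewrite funerneg /= lee_fin; apply: le_trans (absf p q x Dx).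
  by rewrite -posneg_abs lerDr funrpos_ge0.
have finE : forall y, (0 <= y)%E -> (y <= gE)%E -> y \is a fin_num.
  by move=> y y0 yg; rewrite ge0_fin_numE // (le_lt_trans yg) // -ge0_fin_numE.
pose P p q := fine (Ip p q); pose N p q := fine (In p q).
have P0 p q : 0 <= P p q by apply: fine_ge0; case: (Ipl p q).
have N0 p q : 0 <= N p q by apply: fine_ge0; case: (Inl p q).
have IpE p q : Ip p q = (P p q)%:E by rewrite fineK //; case: (Ipl p q) => ? ?; exact: finE.
have InE p q : In p q = (N p q)%:E by rewrite fineK //; case: (Inl p q) => ? ?; exact: finE.
have vE : forall p q, \int[mu]_(x in D) f p q x = P p q - N p q.
  by move=> p q; rewrite /Rintegral integralE -/(Ip p q) -/(In p q) IpE InE.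
set V := \matrix_(p, q) (\int[mu]_(x in D) f p q x).
have RG0 : 0 <= \int[mu]_(x in D) G x by apply: fine_ge0.
have [S0|Sp] := eqVneq (frob V) 0; first by rewrite S0.
have Spos : 0 < frob V by rewrite lt_def Sp frob_ge0.
set S := frob V in Sp Spos *.
pose w p q := (P p q - N p q) / S.
have SE : S = \sum_p \sum_q w p q * (P p q - N p q).
  apply: (mulIf Sp); rewrite -expr2 frob_sq mulr_suml /fsq.
  apply: eq_bigr => p _; rewrite mulr_suml; apply: eq_bigr => q _.
  by rewrite /V mxE vE /w expr2 mulrAC divfK.
have S1 : S <= \sum_p \sum_q (`|w p q| * P p q + `|w p q| * N p q).
  rewrite [X in X <= _]SE; apply: ler_sum => p _; apply: ler_sum => q _.
  rewrite mulrBr; apply: lerD; first by rewrite ler_wpM2r // ler_norm.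
  by rewrite -mulNr ler_wpM2r // -normrN ler_norm.
have ssqw : ssq (fun pq : 'I_m * 'I_n => `|w pq.1 pq.2|) = 1.
  rewrite /ssq -(pair_bigA _ (fun p q => `|w p q| ^+ 2)).
  have -> : \sum_p \sum_q `|w p q| ^+ 2 = fsq V / S ^+ 2.
    rewrite mulr_suml; apply: eq_bigr => p _; rewrite mulr_suml; apply: eq_bigr => q _.
    by rewrite real_normK ?num_real // /w expr_div_n /V mxE vE.
  by rewrite -frob_sq divff // expf_neq0.
suff : ((\sum_p \sum_q (`|w p q| * P p q + `|w p q| * N p q))%:E <= gE)%E.
  rewrite -lee_fin /Rintegral -/gE fineK // => H; apply: le_trans H; rewrite lee_fin; exact: S1.
rewrite -sumEFin.
under eq_bigr do rewrite -sumEFin.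
have step1 : forall p q, ((`|w p q| * P p q + `|w p q| * N p q)%:E <=
    \int[mu]_(x in D) (`|w p q|%:E * (EFin \o f p q)^\+ x + `|w p q|%:E * (EFin \o f p q)^\- x))%E.
  move=> p q; rewrite EFinD !EFinM -IpE -InE.
  have h1 : forall x, D x -> (0 <= `|w p q|%:E * (EFin \o f p q)^\+ x)%E.
    by move=> x _; rewrite mule_ge0 // funepos_ge0.
  have h2 : forall x, D x -> (0 <= `|w p q|%:E * (EFin \o f p q)^\- x)%E.
    by move=> x _; rewrite mule_ge0 // funeneg_ge0.
  apply: le_trans _ (int_add mu h1 h2).
  by apply: leeD; apply: int_scale => //= x _; rewrite ?funepos_ge0 ?funeneg_ge0.
apply: le_trans.
  apply: lee_sum => p _; apply: lee_sum => q _; exact: step1.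
apply: le_trans.
  apply: lee_sum => p _; apply: int_sum => q x _.
  by rewrite adde_ge0 // mule_ge0 // ?funepos_ge0 ?funeneg_ge0.
apply: le_trans.
  apply: int_sum => p x _; apply: sume_ge0 => q _.
  by rewrite adde_ge0 // mule_ge0 // ?funepos_ge0 ?funeneg_ge0.
apply: int_le.
  move=> x _; apply: sume_ge0 => p _; apply: sume_ge0 => q _.
  by rewrite adde_ge0 // mule_ge0 // ?funepos_ge0 ?funeneg_ge0.
move=> x Dx.
under eq_bigr do under eq_bigr do rewrite funerpos funerneg /= -!EFinM -EFinD -mulrDr posneg_abs.
under eq_bigr do rewrite sumEFin.
rewrite sumEFin lee_fin; apply: le_trans (fG x Dx).
rewrite (pair_bigA _ (fun p q => `|w p q| * `|f p q x|)) /=.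
apply: le_trans (CS _ _) _; rewrite ssqw sqrtr1 mul1r frob_ssq /ssq.
rewrite ler_sqrt; last by apply: sumr_ge0 => i _; exact: sqr_ge0.
by apply: ler_sum => pq _; rewrite mxE real_normK ?num_real.
Qed.

End FrobInt.
Section Gauss.
Context {R : realType}.
Local Notation mu := (@lebesgue_measure R).

Lemma gauss_ge0 (t z : R) : 0 <= gauss t z.
Proof. by rewrite /gauss divr_ge0 // ?expR_ge0 // sqrtr_ge0. Qed.

Lemma gauss_int (t : R) : 0 < t -> (\int[mu]_z (gauss t z)%:E)%E = 1%E.
Proof.
move=> t0.
set k := 2 * Num.sqrt t.
have k0 : 0 < k by rewrite /k mulr_gt0 // sqrtr_gt0.
have dF : forall x : R, derivable (fun w : R => k * w) x 1.
  by move=> x; apply: derivableM; [exact: derivable_cst|exact: (@derivable_id R R x 1)].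
have F' : (fun w : R => k * w)^`()%classic = fun _ => k.
  apply/funext => x; rewrite (derive1Ml (f := id)) ?derive1_id ?mulr1 //.
have cG : continuous (gauss t).
  move=> x; rewrite /gauss; apply: cvgM; last exact: cvg_cst.
  apply: (@continuous_comp _ _ _ (fun z : R => - z ^+ 2 / (4 * t)) expR); last exact: continuous_expR.
  apply: cvgM; last exact: cvg_cst.
  by apply: cvgN; exact: exprn_continuous.
rewrite (increasing_ge0_integration_by_substitutionT (F := fun w => k * w)) //; first last.
- exact: gauss_ge0.
- apply/cvgryPge => A; apply: filterS (nbhs_pinfty_ge (r := A / k) (num_real _)) => x hx.
  by move: hx; rewrite -(@ler_pM2l _ k) // mulrCA divff ?gt_eqF // mulr1.
- apply/cvgrNyPle => A; apply: filterS (nbhs_ninfty_le (r := A / k) (num_real _)) => x hx.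
  by move: hx; rewrite -(@ler_pM2l _ k) // mulrCA divff ?gt_eqF // mulr1.
- by rewrite F'; apply: is_cvg_cst.
- by rewrite F'; apply: is_cvg_cst.
- by rewrite F' => x; exact: cvg_cst.
- by move=> x y xy; rewrite ltr_pM2l.
rewrite F'.
have E : forall w, ((gauss t \o (fun w => k * w)) * (fun=> k)) w = gauss_fun w * (Num.sqrt pi)^-1.
  move=> w; change (gauss t (k * w) * k = gauss_fun w * (Num.sqrt pi)^-1).
  rewrite /gauss /gauss_fun.
  have st0 : 0 < Num.sqrt t by rewrite sqrtr_gt0.
  have sp0 : 0 < Num.sqrt (pi : R) by rewrite (sqrtr_gt0 (pi : R)) pi_gt0.
  have -> : - (k * w) ^+ 2 / (4 * t) = - w ^+ 2.
    rewrite /k !exprMn sqr_sqrtr ?ltW //; field.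
    by rewrite gt_eqF.
  have -> : Num.sqrt (4 * pi * t) = 2 * Num.sqrt pi * Num.sqrt t.
    rewrite !sqrtrM ?mulr_ge0 ?pi_ge0 //.
    by rewrite (_ : 4 = 2 ^+ 2) ?sqrtr_sqr ?ger0_norm // ; lra.
  rewrite /k; field.
  by rewrite !gt_eqF.
rewrite (@eq_integral _ _ _ mu setT (fun x => ((gauss_fun x)%:E * ((Num.sqrt pi)^-1)%:E)%E)); last first.
  by move=> x _; rewrite E EFinM.
rewrite ge0_integralZr //=.
- rewrite integralT_gauss -EFinM divff //.
  by rewrite gt_eqF // (sqrtr_gt0 (pi : R)) pi_gt0.
- apply/measurable_realfun.measurable_EFinP; exact: measurable_gauss_fun.
- by move=> x _; rewrite lee_fin gauss_fun_ge0.
Qed.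
End Gauss.
Section ExpInt.
Context {R : realType}.
Local Notation mu := (@lebesgue_measure R).

Lemma cont_Cexp (C k : R) : continuous (fun x : R => C * expR (k * x)).
Proof.
move=> x; apply: cvgM; first exact: cvg_cst.
apply: (@continuous_comp _ _ _ ( *%R k) expR); last exact: continuous_expR.
by apply: cvgM; [exact: cvg_cst|exact: cvg_id].
Qed.

Lemma der_kexp (k x : R) : derivable (fun y : R => expR (k * y)) x 1.
Proof.
apply/derivable1_diffP.
apply: (@differentiable_comp _ _ _ _ ( *%R k) expR).
  by apply/derivable1_diffP; apply: derivableM; [exact: derivable_cst|exact: (@derivable_id R R x 1)].
exact/derivable1_diffP/derivable_expR.
Qed.

Lemma derive_Cexp (C k x : R) :
  (fun y : R => C * expR (k * y))^`()%classic x = C * (expR (k * x) * k).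
Proof.
rewrite (derive1Ml (f := fun y => expR (k * y))); last exact: der_kexp.
congr (_ * _).
rewrite (derive1_comp (f := *%R k) (g := expR)); last first.
- exact: derivable_expR.
- by apply: derivableM; [exact: derivable_cst|exact: (@derivable_id R R x 1)].
have -> : expR^`()%classic (k * x) = expR (k * x).
  by rewrite derive1E; apply: derive_val.
congr (_ * _).
rewrite (_ : *%R k = (fun y => k * id y)) //.
rewrite (derive1Ml (f := id)) ?derive1_id ?mulr1 //.
Qed.

Lemma int_Cexp (C k s : R) : 0 < k -> 0 < s ->
  (\int[mu]_(x in `[0%R, s]) (C * expR (k * x))%:E)%E =
  (C / k * (expR (k * s) - 1))%:E.
Proof.
move=> k0 s0.
rewrite (@continuous_FTC2 _ _ (fun x => C / k * expR (k * x))) //.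
- by rewrite mulr0 expR0 -EFinB mulrBr mulr1.
- by apply: continuous_subspaceT => x; exact: cont_Cexp.
- split.
  + by move=> x _; apply: derivableM; [exact: derivable_cst|exact: der_kexp].
  + by apply: cvg_at_right_filter; exact: cont_Cexp.
  + by apply: cvg_at_left_filter; exact: cont_Cexp.
- move=> x _; rewrite derive_Cexp; field.
  by rewrite gt_eqF.
Qed.

End ExpInt.
Section Heat.
Context {R : realType}.
Local Notation mu := (@lebesgue_measure R).

Lemma frobZ m n (c : R) (A : 'M[R]_(m, n)) : frob (c *: A) = `|c| * frob A.
Proof.
rewrite !frobE /fsq -sqrtr_sqr -sqrtrM ?sqr_ge0 // mulr_sumr; congr (Num.sqrt _).
apply: eq_bigr => i _; rewrite mulr_sumr; apply: eq_bigr => j _.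
by rewrite mxE exprMn.
Qed.

Lemma cont_gauss (t : R) : continuous (gauss t).
Proof.
move=> x; rewrite /gauss; apply: cvgM; last exact: cvg_cst.
apply: (@continuous_comp _ _ _ (fun z : R => - z ^+ 2 / (4 * t)) expR); last exact: continuous_expR.
apply: cvgM; last exact: cvg_cst.
by apply: cvgN; exact: exprn_continuous.
Qed.

Lemma gauss_intB (t B : R) : 0 < t -> 0 <= B ->
  (\int[mu]_z (gauss t z * B)%:E)%E = B%:E.
Proof.
move=> t0 B0.
rewrite (@eq_integral _ _ _ mu setT (fun z => ((gauss t z)%:E * B%:E)%E)); last first.
  by move=> z _; rewrite EFinM.
rewrite ge0_integralZr //=.
- by rewrite gauss_int // mul1e.
- apply/measurable_realfun.measurable_EFinP; apply: measurable_realfun.continuous_measurable_fun.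
  exact: cont_gauss.
- by move=> z _; rewrite lee_fin gauss_ge0.
Qed.

Variables (d m1 m2 : nat).
Local Notation field := (field R d m1 m2).

Lemma heat_dir_bound i t (u : field) (B : R) : 0 <= B ->
  (forall y, frob (u y) <= B) -> forall x, frob (heat_dir i t u x) <= B.
Proof.
move=> B0 uB x; rewrite /heat_dir; case: ifP => [_|/negbT]; first exact: uB.
rewrite -ltNge => t0.
have H := @frob_Rint R _ _ mu setT m1 m2
  (fun p q z => gauss t z * u (x - z *: unit_vec R i) p q) (fun z => gauss t z * B).
apply: le_trans (H _ _) _.
- move=> z _.
  have -> : \matrix_(p, q) (gauss t z * u (x - z *: unit_vec R i) p q) =
            gauss t z *: u (x - z *: unit_vec R i).
    by apply/matrixP => p q; rewrite !mxE.
  by rewrite frobZ ger0_norm ?gauss_ge0 // ler_wpM2l ?gauss_ge0.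
- by rewrite gauss_intB // ltry.
- by rewrite /Rintegral gauss_intB.
Qed.

Lemma heat_bound t (u : field) (B : R) : 0 <= B ->
  (forall y, frob (u y) <= B) -> forall x, frob (heat t u x) <= B.
Proof.
move=> B0 uB; rewrite /heat; elim: (enum 'I_d) => [|i l IH] //= x.
exact: heat_dir_bound.
Qed.

Lemma semigroup_bound eps kappa s (u : field) (B : R) : 0 <= B ->
  (forall y, frob (u y) <= B) -> forall x,
  frob (semigroupL eps kappa s u x) <= expR (- kappa * s) * B.
Proof.
move=> B0 uB x; rewrite /semigroupL frobZ ger0_norm ?expR_ge0 //.
by rewrite ler_wpM2l ?expR_ge0 // heat_bound.
Qed.

Lemma duhamel_bound eps kappa s (F : R -> field) (K : R) :
  0 < kappa -> 0 < s -> 0 <= K ->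
  (forall sig, 0 <= sig <= s -> forall y, frob (F sig y) <= K) ->
  forall x, frob (duhamel eps kappa s F x) <= K / kappa * (1 - expR (- kappa * s)).
Proof.
move=> k0 s0 K0 FK x; rewrite /duhamel.
pose C := K * expR (- kappa * s).
have GE : forall sig, C * expR (kappa * sig) = expR (- kappa * (s - sig)) * K.
  by move=> sig; rewrite /C -mulrA -expRD mulrC; congr (expR _ * _); ring.
have H := @frob_Rint R _ _ mu `[0, s] m1 m2
  (fun p q sig => semigroupL eps kappa (s - sig) (F sig) x p q)
  (fun sig => C * expR (kappa * sig)).
apply: le_trans (H _ _) _.
- move=> sig; rewrite /= in_itv /= => hs.
  have -> : \matrix_(p, q) semigroupL eps kappa (s - sig) (F sig) x p q =
            semigroupL eps kappa (s - sig) (F sig) x.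
    by apply/matrixP => p q; rewrite !mxE.
  by rewrite GE; apply: semigroup_bound => // y; apply: FK.
- by rewrite int_Cexp // ltry.
- rewrite /Rintegral int_Cexp //= /C.
  rewrite le_eqVlt; apply/orP; left; apply/eqP.
  rewrite mulNr expRN; field.
  by rewrite expR_eq0 gt_eqF.
Qed.

End Heat.
Section Alg.
Context {R : realType}.

Lemma fsq_tr m n (X : 'M[R]_(m, n)) : fsq X = \tr (X^T *m X).
Proof.
rewrite /mxtrace /fsq exchange_big; apply: eq_bigr => j _; rewrite mxE.
by apply: eq_bigr => i _; rewrite mxE expr2.
Qed.

Lemma fsq_mul m n p (X : 'M[R]_(m, n)) (Y : 'M[R]_(n, p)) :
  fsq (X *m Y) <= fsq X * fsq Y.
Proof.
rewrite /fsq mulr_suml; apply: ler_sum => i _.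
rewrite [in X in _ <= X]exchange_big mulr_sumr /=.
apply: ler_sum => k _; rewrite mxE.
exact: (CS2 (fun j => X i j) (fun j => Y j k)).
Qed.

Lemma poly_id (K : R) :
  'X * ((K%:P + 1 - 'X) * (K%:P + 1 - 'X)) =
  (K * K)%:P + (K * (K - 1 - 1))%:P * ('X - 1) - ('X - 1) * ((K + K)%:P - 'X) * ('X - 1)
  :> {poly R}.
Proof. rewrite !polyCM !polyCB !polyCD polyC1; ring. Qed.

Lemma mat_id k (B : 'M[R]_k.+1) (K : R) :
  B * ((K%:M + 1 - B) * (K%:M + 1 - B)) =
  (K * K)%:M + (K * (K - 1 - 1))%:M * (B - 1) - (B - 1) * ((K + K)%:M - B) * (B - 1).
Proof.
have := congr1 (horner_mx B) (poly_id K).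
by rewrite !(rmorphM, rmorphD, rmorphB, rmorphN, rmorph1) /= !horner_mx_C !horner_mx_X.
Qed.


Lemma Nop_bound k m (A : 'M[R]_(m, k.+1)) (kappa : R) :
  2 <= kappa -> 3 / 2 * k.+1%:R - 1 <= kappa -> frob A <= Num.sqrt k.+1%:R ->
  frob (Nop kappa A) <= kappa * Num.sqrt k.+1%:R.
Proof.
move=> k2 km fA.
set n := k.+1.
have fsA : fsq A <= n%:R.
  rewrite -frob_sq -[n%:R]sqr_sqrtr ?ler0n // !expr2.
  by apply: ler_pM; rewrite ?frob_ge0.
set B : 'M[R]_n := A^T *m A.
have BT : B^T = B by rewrite /B trmx_mul trmxK.
set C : 'M[R]_n := B - 1.
have CT : C^T = C by rewrite /C linearB /= BT trmx1.
have NE : Nop kappa A = A *m (kappa%:M + 1 - B).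
  by rewrite /Nop /fAC mulmxBr mulmxDr mul_mx_scalar mulmx1 /B mulmxA addrA.
have trN : fsq (Nop kappa A) = \tr (B * ((kappa%:M + 1 - B) * (kappa%:M + 1 - B))).
  rewrite fsq_tr NE trmx_mul.
  have -> : (kappa%:M + 1 - B)^T = kappa%:M + 1 - B.
    by rewrite linearB linearD /= tr_scalar_mx trmx1 BT.
  set M := kappa%:M + 1 - B.
  by rewrite mulmxA -(mulmxA M A^T A) -/B -mulmxA mxtrace_mulC -mulmxA.
rewrite mat_id -/C in trN.
have scM : forall (a : R) (X : 'M[R]_n), a%:M * X = a *: X.
  by move=> a X; exact: mul_scalar_mx.
have Msc : forall (a : R) (X : 'M[R]_n), X * a%:M = a *: X.
  by move=> a X; exact: mul_mx_scalar.
have E3 : forall (Cm : 'M[R]_n) (a : R), Cm * (a%:M - B) * Cm = a *: (Cm * Cm) - Cm * B * Cm.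
  by move=> Cm a; rewrite mulrBr mulrBl Msc -scalerAl.
rewrite E3 scM in trN.
have trC : \tr C = fsq A - n%:R.
  by rewrite /C raddfB /= mxtrace1 fsq_tr.
have trCC : \tr (C * C) = fsq C by rewrite fsq_tr CT.
have trCBC : \tr (C * B * C) = fsq (A *m C).
  by rewrite fsq_tr trmx_mul CT /B [in RHS]mulmxA -[in RHS](mulmxA C).
clearbody C.
rewrite !raddfB /= !mxtraceD /= !mxtraceZ mxtrace_scalar in trN.
rewrite trC trCC trCBC in trN.
have fAC : fsq (A *m C) <= fsq A * fsq C by exact: fsq_mul.
have fC0 : 0 <= fsq C := fsq_ge0 C.
have fA0 : 0 <= fsq A := fsq_ge0 A.
have n2 : n%:R <= kappa + kappa.
  have h1n : 1 <= n%:R :> R by rewrite ler1n.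
  move: km h1n; rewrite /n; move: (k.+1%:R : R) => x; lra.
have h1 : fsq A * fsq C <= (kappa + kappa) * fsq C.
  by apply: ler_wpM2r => //; apply: le_trans fsA n2.
have h2 : kappa * (kappa - 1 - 1) * (fsq A - n%:R) <= 0.
  apply: mulr_ge0_le0; last by rewrite subr_le0.
  by apply: mulr_ge0; lra.
have h3 : fsq (Nop kappa A) <= kappa * kappa * n%:R.
  rewrite trN mulr_natr; lra.
rewrite frobE -(ger0_norm (mulr_ge0 (le_trans _ k2) (sqrtr_ge0 n%:R))) //.
rewrite -sqrtr_sqr ler_sqrt ?sqr_ge0 // exprMn sqr_sqrtr ?ler0n //.
Qed.
End Alg.
Section Interp.
Context {R : realType}.

Lemma frobD m n (A B : 'M[R]_(m, n)) : frob (A + B) <= frob A + frob B.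
Proof.
rewrite !frob_ssq.
have -> : ssq (fun pq : 'I_m * 'I_n => (A + B) pq.1 pq.2) =
          ssq (fun pq : 'I_m * 'I_n => A pq.1 pq.2 + B pq.1 pq.2).
  by apply: eq_bigr => pq _; rewrite mxE.
exact: ssq_tri.
Qed.

Lemma frob0 m n : frob (0 : 'M[R]_(m, n)) = 0.
Proof.
rewrite frobE /fsq big1 ?sqrtr0 // => i _; rewrite big1 // => j _.
by rewrite mxE expr0n.
Qed.

Lemma frob_sum m n (I : Type) (r : seq I) (F : I -> 'M[R]_(m, n)) :
  frob (\sum_(i <- r) F i) <= \sum_(i <- r) frob (F i).
Proof.
elim: r => [|i r IH]; first by rewrite !big_nil frob0.
rewrite !big_cons; apply: le_trans (frobD _ _) _; exact: lerD.
Qed.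

Lemma interp_bound m n j (t : nat -> R) (v : nat -> 'M[R]_(m, n)) (T : R) :
  exists M0, forall s, `|s| <= T -> frob (interp j t v s) <= M0.
Proof.
exists (\sum_(k < j.+1) (\prod_(l < j.+1 | l != k) ((T + `|t l|) * `|(t k - t l)^-1|)) * frob (v k)).
move=> s sT; rewrite /interp; apply: le_trans (frob_sum _ _) _.
apply: ler_sum => k _; rewrite frobZ ler_wpM2r ?frob_ge0 //.
rewrite normr_prod; apply: ler_prod => l _; rewrite normr_ge0 /= normrM.
apply: ler_wpM2r => //; apply: le_trans (ler_normB _ _) _.
by rewrite lerD2r.
Qed.

End Interp.

Section PtildeB.
Context {R : realType} {d m1 m2 : nat}.

Lemma Ptilde_bound (kappa tau : R) a (U : field R d m1 m2) j Wj sig x :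
  0 < kappa -> 0 <= sig <= tau ->
  frob (Ptilde kappa tau a U j Wj sig x) <= kappa * Num.sqrt m2%:R.
Proof.
move=> k0 /andP[s0 sT].
have t0 : 0 <= tau by apply: le_trans s0 sT.
set S := [set frob (Pj kappa tau a U j Wj s x) | s in `[0, tau]].
have [M0 HM0] := interp_bound j (fun k => a j k * tau)
   (fun k => if k == 0%N then Nop kappa (U x) else Nop kappa (Wj (a j k * tau) x)) tau.
have hS : has_sup S.
  split; first by exists (frob (Pj kappa tau a U j Wj 0 x)); exists 0 => //=; rewrite in_itv /= lexx t0.
  exists M0 => _ [s hs <-]; move: hs; rewrite /= in_itv /= => /andP[s0' sT']; apply: HM0.
  by rewrite ger0_norm.
have Ple : forall s, 0 <= s <= tau -> frob (Pj kappa tau a U j Wj s x) <= sup S.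
  by move=> s hs; apply: sup_upper_bound => //; exists s => //=; rewrite in_itv.
have Psig : frob (Pj kappa tau a U j Wj sig x) <= sup S by apply: Ple; rewrite s0 sT.
rewrite /Ptilde frobZ /alpha -/S.
have K0 : 0 <= kappa * Num.sqrt m2%:R by apply: mulr_ge0; [exact: ltW|exact: sqrtr_ge0].
case: ifPn => [/eqP M0'|M0'].
  by rewrite normr1 mul1r; apply: le_trans Psig _; rewrite M0'.
have Mpos : 0 < sup S by rewrite lt_def M0' (le_trans (frob_ge0 _) Psig).
rewrite ger0_norm; last by rewrite le_min ler01 andbT divr_ge0 // ltW.
apply: le_trans (ler_wpM2l _ Psig) _; first by rewrite le_min ler01 andbT divr_ge0 // ltW.
have amin : Num.min (kappa * Num.sqrt m2%:R / sup S) 1 <= kappa * Num.sqrt m2%:R / sup S.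
  by rewrite ge_min lexx.
apply: le_trans (ler_wpM2r (ltW Mpos) amin) _.
by rewrite divfK // gt_eqF.
Qed.

End PtildeB.
Section Final.
Context {R : realType} {d m1 m2 : nat}.

Lemma Nop_bound' (A : 'M[R]_(m1, m2)) kappa : (1 <= m2)%N -> 2 <= kappa ->
  3 / 2 * m2%:R - 1 <= kappa -> frob A <= Num.sqrt m2%:R ->
  frob (Nop kappa A) <= kappa * Num.sqrt m2%:R.
Proof. by case: m2 A => [|k] A // _; exact: Nop_bound. Qed.

Lemma step_bound (eps kappa tau : R) a (U : field R d m1 m2) r :
  (1 <= m2)%N -> 2 <= kappa -> 3 / 2 * m2%:R - 1 <= kappa -> 0 < tau ->
  (forall y, frob (U y) <= Num.sqrt m2%:R) ->
  forall x, frob (Wstage eps kappa tau a U r tau x) <= Num.sqrt m2%:R.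
Proof.
move=> hm k2 km t0 hU x.
have k0 : 0 < kappa by apply: lt_le_trans k2; rewrite ltr0n.
set s := Num.sqrt m2%:R.
have s0 : 0 <= s := sqrtr_ge0 _.
have FK : forall F : R -> field R d m1 m2,
    (forall sig, 0 <= sig <= tau -> forall y, frob (F sig y) <= kappa * s) ->
    frob (semigroupL eps kappa tau U x + duhamel eps kappa tau F x) <= s.
  move=> F HF; apply: le_trans (frobD _ _) _.
  apply: le_trans (lerD (semigroup_bound eps kappa tau s0 hU x)
                        (duhamel_bound eps k0 t0 (mulr_ge0 (ltW k0) s0) HF x)) _.
  rewrite le_eqVlt; apply/orP; left; apply/eqP; field.
  by rewrite gt_eqF.
case: r => [|j] /=; apply: FK.
- by move=> sig _ y; exact: Nop_bound'.
- by move=> sig hs y; exact: Ptilde_bound.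
Qed.

End Final.

Unset Implicit Arguments.

Theorem theorem3p1 (R : realType) (d m1 m2 : nat)
  (lo hi : 'I_d -> R) (eps kappa : R) (r : nat)
  (a : nat -> nat -> R) (U0 : field R d m1 m2) :
  (1 <= d <= 3)%N ->
  (forall i, lo i < hi i) ->
  (1 <= m2 <= m1)%N ->
  0 < eps ->
  (3 / 2 * m2%:R - 1 <= kappa) -> (2 <= kappa) ->
  (forall j : nat, (1 <= j)%N ->
     a j 0%N = 0 /\ a j j = 1 /\ (forall k : nat, (k < j)%N -> a j k < a j k.+1)) ->
  (1 <= r)%N ->
  {in [set: pt R d], continuous U0} ->
  box_periodic lo hi U0 ->
  (forall x, frob (U0 x) <= Num.sqrt m2%:R) ->
  forall tau : R, 0 < tau ->
  forall n : nat, (1 <= n)%N ->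
  forall x : pt R d, in_box lo hi x ->
    frob (etdrk r eps kappa tau a U0 n x) <= Num.sqrt m2%:R.
Proof.
move=> _ _ /andP[hm _] _ km k2 _ _ _ _ hU tau t0 n _ x _.
elim: n x => [|n IH] x /=; first exact: hU.
exact: step_bound.
Qed.
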